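(* For every $n\ge 3$, $$\sum_{T\in\mathcal{BT}_n}S(T)=n\sum_{k=1}^{n-1}\frac{(2n-k-3)!\,k^2}{(n-k-1)!\,2^{n-k-1}}.$$
   Context: $\mathcal{BT}_n$ is the set of (isomorphism classes of) binary phylogenetic trees with leaves bijectively labeled by $\{1,\dots,n\}$ (rooted trees, every internal node with exactly two children). The depth $\delta_T(v)$ is the number of arcs from the root to $v$, and the Sackin index is $S(T)=\sum_{i=1}^n\delta_T(i)$. *)

(* Defs.v *)
From HB Require Import structures.
From mathcomp Require Import all_boot all_order all_algebra.
From Stdlib Require List.
Set Implicit Arguments. Unset Strict Implicit. Unset Printing Implicit Defensive.

Inductive btree : Type :=
| Leaf : nat -> btree
| Node : btree -> btree -> btree.

Fixpoint leaves (t : btree) : seq nat :=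
  match t with
  | Leaf i => [:: i]
  | Node l r => leaves l ++ leaves r
  end.

Fixpoint leaf_depths (t : btree) : seq nat :=
  match t with
  | Leaf _ => [:: 0]
  | Node l r => map S (leaf_depths l ++ leaf_depths r)
  end.

Definition sackin (t : btree) : nat := sumn (leaf_depths t).

Fixpoint minleaf (t : btree) : nat :=
  match t with
  | Leaf i => i
  | Node l r => minn (minleaf l) (minleaf r)
  end.

(* Canonical representative of an isomorphism class (children are unordered):
   at each internal node the left subtree contains the smallest label. *)
Fixpoint canonical (t : btree) : bool :=
  match t with
  | Leaf _ => true
  | Node l r => [&& canonical l, canonical r & minleaf l < minleaf r]
  end.

Definition is_BT (n : nat) (t : btree) : bool :=
  perm_eq (leaves t) (iota 1 n) && canonical t.

(* Main.v *)
Require Import Defs.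
From HB Require Import structures.
From mathcomp Require Import all_boot all_order all_algebra.
From Stdlib Require List.
From mathcomp Require Import zify ring lra.
Import GRing.Theory Num.Theory.
Set Implicit Arguments. Unset Strict Implicit. Unset Printing Implicit Defensive.


Fixpoint btree_eqb (s t : btree) : bool :=
  match s, t with
  | Leaf a, Leaf b => a == b
  | Node l r, Node l' r' => btree_eqb l l' && btree_eqb r r'
  | _, _ => false
  end.

Lemma btree_eqP : Equality.axiom btree_eqb.
Proof.
elim=> [a|l IHl r IHr] [b|l' r'] /=; try by constructor.
- by apply: (iffP eqP) => [->|[]].
- apply: (iffP andP) => [[/IHl -> /IHr ->]|[<- <-]] //; split; [exact/IHl|exact/IHr].
Qed.
HB.instance Definition _ := hasDecEq.Build btree btree_eqP.

Fixpoint ins (a : nat) (t : btree) : seq btree :=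
  Node t (Leaf a) :: match t with
                     | Leaf _ => [::]
                     | Node l r => [seq Node l' r | l' <- ins a l] ++ [seq Node l r' | r' <- ins a r]
                     end.

Lemma size_leaves_gt0 t : 0 < size (leaves t).
Proof. by elim: t => //= l IHl r _; rewrite size_cat addn_gt0 IHl. Qed.

Lemma ins_leaves a t x : x \in ins a t -> perm_eq (leaves x) (a :: leaves t).
Proof.
elim: t x => [b|l IHl r IHr] x /=.
  by rewrite inE => /eqP -> /=; rewrite (perm_catC [:: b]).
rewrite inE mem_cat => /orP [/eqP -> /=|/orP [/mapP [l' Hl' ->]|/mapP [r' Hr' ->]]] /=.
- by rewrite cats1 perm_rcons.
- by rewrite -cat_cons perm_cat2r IHl.
- have H := IHr _ Hr'; rewrite -(perm_cat2l (leaves l)) in H.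
  apply: (perm_trans H).
  by rewrite (perm_catCA (leaves l) [:: a] (leaves r)).
Qed.

Lemma minleaf_in t : minleaf t \in leaves t.
Proof.
elim: t => [b|l IHl r IHr] /=; first by rewrite inE.
by rewrite mem_cat /minn; case: ifP => _; [rewrite IHl | rewrite IHr orbT].
Qed.

Lemma ins_minleaf a t x : x \in ins a t -> minleaf x = minn (minleaf t) a.
Proof.
elim: t x => [b|l IHl r IHr] x /=.
  by rewrite inE => /eqP -> /=.
rewrite inE mem_cat => /orP [/eqP -> //|/orP [/mapP [l' Hl' ->]|/mapP [r' Hr' ->]]] /=.
- by rewrite (IHl _ Hl') -!minnA [minn a _]minnC.
- by rewrite (IHr _ Hr') minnA.
Qed.


Lemma minleaf_lt a t : all (fun b => b < a) (leaves t) -> minleaf t < a.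
Proof. by move/allP; apply; apply: minleaf_in. Qed.

Lemma ins_canon a t x : all (fun b => b < a) (leaves t) -> canonical t ->
  x \in ins a t -> canonical x.
Proof.
elim: t x => [b|l IHl r IHr] x /=.
  by move=> Ha _; rewrite inE => /eqP -> /=; move: Ha; rewrite /= andbT.
rewrite all_cat => /andP [Hl Hr] /and3P [cl cr lr].
rewrite inE mem_cat => /orP [/eqP -> /=|/orP [/mapP [l' Hl' ->]|/mapP [r' Hr' ->]]] /=.
- rewrite cl cr lr /=.
  exact: leq_ltn_trans (geq_minl _ _) (minleaf_lt Hl).
- rewrite (IHl _ Hl cl Hl') cr (ins_minleaf Hl') /=.
  by rewrite (minn_idPl (ltnW (minleaf_lt Hl))).
- rewrite (IHr _ Hr cr Hr') cl (ins_minleaf Hr') /= ltn_min lr.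
  exact: (ltn_trans lr (minleaf_lt Hr)).
Qed.

Lemma ins_canon_rev a t x : all (fun b => b < a) (leaves t) ->
  x \in ins a t -> canonical x -> canonical t.
Proof.
elim: t x => [b|l IHl r IHr] x //=.
rewrite all_cat => /andP [Hl Hr].
rewrite inE mem_cat => /orP [/eqP -> /=|/orP [/mapP [l' Hl' ->]|/mapP [r' Hr' ->]]] /=.
- by case/andP.
- case/and3P => cl' -> ; rewrite (IHl _ Hl Hl' cl') (ins_minleaf Hl').
  by rewrite (minn_idPl (ltnW (minleaf_lt Hl))).
- case/and3P => -> cr'; rewrite (IHr _ Hr Hr' cr') (ins_minleaf Hr') ltn_min.
  by case/andP.
Qed.

Definition isLeaf (a : nat) (t : btree) : bool :=
  match t with Leaf b => b == a | _ => false end.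

Fixpoint del (a : nat) (t : btree) : btree :=
  match t with
  | Leaf b => Leaf b
  | Node l r =>
      if isLeaf a r then l else if isLeaf a l then r
      else if a \in leaves l then Node (del a l) r else Node l (del a r)
  end.

Lemma ins_node a t x : x \in ins a t -> exists l r, x = Node l r.
Proof.
case: t => [b|l r] /=; first by rewrite inE => /eqP ->; eauto.
rewrite inE mem_cat => /orP [/eqP ->|/orP [/mapP [l' _ ->]|/mapP [r' _ ->]]]; eauto.
Qed.

Lemma ins_del_inv a t x : a \notin leaves t -> x \in ins a t -> del a x = t.
Proof.
elim: t x => [b|l IHl r IHr] x /=.
  by move=> _; rewrite inE => /eqP -> /=; rewrite eqxx.
rewrite mem_cat negb_or => /andP [Hl Hr].
rewrite inE mem_cat => /orP [/eqP -> /=|/orP [/mapP [l' Hl' ->]|/mapP [r' Hr' ->]]] /=.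
- by rewrite eqxx.
- have Ha : a \in leaves l' by rewrite (perm_mem (ins_leaves Hl')) inE eqxx.
  have -> : isLeaf a r = false.
    by case: r Hr {IHr} => //= b; rewrite inE eq_sym => /negbTE.
  have [l1 [l2 El]] := ins_node Hl'.
  by rewrite {1}El /= Ha (IHl _ Hl Hl').
- have [l1 [l2 Er]] := ins_node Hr'.
  have -> : isLeaf a r' = false by rewrite Er.
  have -> : isLeaf a l = false.
    by case: l Hl {IHl} => //= b; rewrite inE eq_sym => /negbTE.
  by rewrite (negbTE Hl) (IHr _ Hr Hr').
Qed.

Lemma ins_head a t : Node t (Leaf a) \in ins a t.
Proof. by case: t => [?|? ?]; rewrite /= inE eqxx. Qed.

Lemma ins_del a t : canonical t -> all (fun b => b <= a) (leaves t) ->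
  a \in leaves t -> ~~ isLeaf a t -> t \in ins a (del a t).
Proof.
elim: t => [b|l IHl r IHr] /=; first by move=> _ _; rewrite inE eq_sym => ->.
case/and3P => cl cr lr.
rewrite all_cat mem_cat => /andP [Hl Hr] Ha _.
case: ifP => Hr1.
  by case: r Hr1 {IHr cr lr Hr Ha} => //= b /eqP ->; apply: ins_head.
case: ifP => Hl1.
  case: l Hl1 {IHl cl Hl Ha} lr => //= b /eqP -> lr.
  have := allP Hr _ (minleaf_in r); rewrite leqNgt lr //.
case: ifP => Hal.
  by rewrite inE mem_cat; apply/orP; right; apply/orP; left;
    apply/mapP; exists l => //; apply: IHl => //; rewrite Hl1.
rewrite Hal /= in Ha.
by rewrite inE mem_cat; apply/orP; right; apply/orP; right;
    apply/mapP; exists r => //; apply: IHr => //; rewrite Hr1.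
Qed.


Lemma mem_ins_leaves a t x : x \in ins a t -> a \in leaves x.
Proof. by move/ins_leaves/perm_mem ->; rewrite inE eqxx. Qed.

Lemma uniq_ins a t : a \notin leaves t -> uniq (ins a t).
Proof.
elim: t => [b|l IHl r IHr] //=.
rewrite mem_cat negb_or => /andP [Hl Hr].
rewrite mem_cat negb_or cat_uniq !map_inj_uniq ?IHl ?IHr //=;
  last by move=> x y [].
2: by move=> x y [].
apply/and3P; split.
- apply/andP; split; apply/mapP => [[x Hx E]].
    by case: E => _ Er; move: Hr; rewrite -Er /= inE eqxx.
  case: E => El _; have := f_equal (fun t => size (leaves t)) El.
  by rewrite /= size_cat; have := size_leaves_gt0 r; lia.
- apply/hasPn => x /mapP [r' _ ->]; apply/mapP => [[l' Hl' [El _]]].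
  by move: Hl; rewrite El (mem_ins_leaves Hl').
- done.
Qed.

Lemma size_ins a t : (size (ins a t)).+1 = 2 * size (leaves t).
Proof.
elim: t => [b|l IHl r IHr] //=.
by rewrite size_cat !size_map size_cat; lia.
Qed.

Lemma size_leaf_depths t : size (leaf_depths t) = size (leaves t).
Proof. by elim: t => //= l IHl r IHr; rewrite size_map !size_cat IHl IHr. Qed.

Lemma sumn_mapS s : sumn (map S s) = sumn s + size s.
Proof. elim: s => [|x s IH] /=; [lia|rewrite IH; lia]. Qed.

Lemma sackin_node l r :
  sackin (Node l r) = sackin l + sackin r + size (leaves l) + size (leaves r).
Proof.
by rewrite /sackin /= sumn_mapS sumn_cat size_cat !size_leaf_depths; lia.
Qed.

Lemma sumn_map_add (T : Type) (f : T -> nat) c s :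
  sumn [seq f x + c | x <- s] = sumn [seq f x | x <- s] + c * size s.
Proof. elim: s => [|x s IH] /=; [lia|rewrite IH; lia]. Qed.

Lemma sum_ins a t : sumn [seq sackin x | x <- ins a t] =
  (2 * size (leaves t) + 2) * sackin t + size (leaves t) + 1.
Proof.
elim: t => [b|l IHl r IHr] //=.
rewrite map_cat sumn_cat -!map_comp.
have E1 : [seq (sackin \o (fun l' => Node l' r)) x | x <- ins a l] =
  [seq sackin x + (sackin r + (size (leaves l)).+1 + size (leaves r)) | x <- ins a l].
  apply/eq_in_map => x Hx /=; rewrite sackin_node (perm_size (ins_leaves Hx)) /=; lia.
have E2 : [seq (sackin \o (fun r' => Node l r')) x | x <- ins a r] =
  [seq sackin x + (sackin l + size (leaves l) + (size (leaves r)).+1) | x <- ins a r].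
  apply/eq_in_map => x Hx /=; rewrite sackin_node (perm_size (ins_leaves Hx)) /=; lia.
rewrite E1 E2 !sumn_map_add IHl IHr.
have Hl := size_ins a l; have Hr := size_ins a r.
rewrite !sackin_node size_cat /=.
have -> : sackin (Leaf a) = 0 by [].
nia.
Qed.


Fixpoint E (n : nat) : seq btree :=
  match n with
  | 0 => [::]
  | S p => if p is 0 then [:: Leaf 1] else flatten [seq ins n t | t <- E p]
  end.

Lemma E_S p : E p.+2 = flatten [seq ins p.+2 t | t <- E p.+1].
Proof. by []. Qed.

Lemma iotaS1 p : perm_eq (iota 1 p.+1) (p.+1 :: iota 1 p).
Proof. by rewrite -(addn1 p) iotaD /= cats1 perm_rcons add1n addn1. Qed.

Lemma is_BT_lt n t : is_BT n t -> all (fun b => b < n.+1) (leaves t).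
Proof.
case/andP => /perm_mem Hp _; apply/allP => x; rewrite Hp mem_iota; lia.
Qed.

Lemma mem_E p t : (t \in E p.+1) = is_BT p.+1 t.
Proof.
elim: p t => [|p IH] t.
  rewrite /= inE /is_BT; case: t => [b|l r] /=.
    apply/eqP/idP => [[->]|/andP [Hp _]]; first by rewrite perm_refl.
    by have := perm_mem Hp 1; rewrite !inE eqxx => /eqP ->.
  apply/esym/negbTE; apply/negP => /andP [/perm_size] /=.
  rewrite size_cat; have := size_leaves_gt0 l; have := size_leaves_gt0 r; lia.
rewrite E_S; apply/flattenP/idP.
  move=> [s /mapP [t' Ht' ->] Ht].
  rewrite IH in Ht'; have Hlt := is_BT_lt Ht'.
  case/andP: Ht' => Hp Hc; apply/andP; split; last exact: ins_canon Hlt Hc Ht.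
  apply: (perm_trans (ins_leaves Ht)); rewrite perm_sym.
  by apply: (perm_trans (iotaS1 _)); rewrite perm_cons perm_sym.
move=> Ht; have Hlt := is_BT_lt Ht; case/andP: Ht => Hp Hc.
have Hin : p.+2 \in leaves t by rewrite (perm_mem Hp) mem_iota; lia.
have Hnl : ~~ isLeaf p.+2 t.
  case: t Hp {Hin Hlt Hc} => //= b /perm_size /=; lia.
have Hle : all (fun b => b <= p.+2) (leaves t) by [].
have Ht := ins_del Hc Hle Hin Hnl.
have Hp' : perm_eq (leaves (del p.+2 t)) (iota 1 p.+1).
  have H1 := ins_leaves Ht; rewrite perm_sym in H1.
  have H2 := perm_trans (perm_trans H1 Hp) (iotaS1 _).
  by rewrite perm_cons in H2.
have Hlt' : all (fun b => b < p.+2) (leaves (del p.+2 t)).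
  by apply/allP => x; rewrite (perm_mem Hp') mem_iota; lia.
exists (ins p.+2 (del p.+2 t)) => //; apply/mapP; exists (del p.+2 t) => //.
by rewrite IH /is_BT Hp' (ins_canon_rev Hlt' Ht Hc).
Qed.


Lemma uniq_flatten_map (T U : eqType) (f : T -> seq U) (L : seq T) :
  uniq L -> (forall t, t \in L -> uniq (f t)) ->
  (forall t1 t2 x, t1 \in L -> t2 \in L -> x \in f t1 -> x \in f t2 -> t1 = t2) ->
  uniq (flatten (map f L)).
Proof.
elim: L => //= t L IH /andP [tL uL] Hu Hd.
rewrite cat_uniq Hu ?inE ?eqxx //= IH //; last first.
- by move=> t1 t2 x H1 H2; apply: Hd; rewrite inE ?H1 ?H2 orbT.
- by move=> t1 H1; apply: Hu; rewrite inE H1 orbT.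
rewrite andbT; apply/hasPn => x /flattenP [s /mapP [t2 Ht2 ->] Hx]; apply/negP => Hx'.
have := Hd t t2 x; rewrite inE eqxx inE Ht2 orbT => /(_ isT isT Hx' Hx) E.
by move: tL; rewrite E Ht2.
Qed.

Lemma notin_BT p t : is_BT p.+1 t -> p.+2 \notin leaves t.
Proof. by case/andP => /perm_mem ->; rewrite mem_iota; lia. Qed.

Lemma uniq_E p : uniq (E p.+1).
Proof.
elim: p => // p IH; rewrite E_S; apply: uniq_flatten_map => //.
  by move=> t; rewrite mem_E => /notin_BT; apply: uniq_ins.
move=> t1 t2 x; rewrite !mem_E => /notin_BT H1 /notin_BT H2 X1 X2.
by rewrite -(ins_del_inv H1 X1) (ins_del_inv H2 X2).
Qed.

Lemma sumn_flatten_map (T U : Type) (g : U -> nat) (f : T -> seq U) L :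
  sumn (map g (flatten (map f L))) = sumn (map (fun t => sumn (map g (f t))) L).
Proof. by elim: L => //= t L IH; rewrite map_cat sumn_cat IH. Qed.

Lemma sumn_map_lin (T : eqType) (f g : T -> nat) c d s :
  (forall x, x \in s -> g x = c * f x + d) ->
  sumn (map g s) = c * sumn (map f s) + d * size s.
Proof.
elim: s => [|x s IH] H /=; first lia.
rewrite H ?inE ?eqxx // IH; first lia.
by move=> y Hy; apply: H; rewrite inE Hy orbT.
Qed.

Lemma size_leaves_BT n t : is_BT n t -> size (leaves t) = n.
Proof. by case/andP => /perm_size ->; rewrite size_iota. Qed.

Definition NN n := size (E n).
Definition AA n := sumn (map sackin (E n)).

Lemma NN_S p : NN p.+2 = (2 * p + 1) * NN p.+1.
Proof.
rewrite /NN E_S size_flatten /shape -map_comp.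
rewrite (@sumn_map_lin _ (fun _ => 0) _ 0 (2 * p + 1)) ?muln0 ?add0n //.
move=> t; rewrite mem_E => /size_leaves_BT H /=.
have := size_ins p.+2 t; rewrite H; lia.
Qed.

Lemma AA_S p : AA p.+2 = (2 * p + 4) * AA p.+1 + (p + 2) * NN p.+1.
Proof.
rewrite /AA E_S sumn_flatten_map.
apply: sumn_map_lin => t; rewrite mem_E => /size_leaves_BT H.
rewrite sum_ins H; lia.
Qed.

Lemma closed_forms p :
  NN p.+1 * (2 ^ p * p`!) = (2 * p)`! /\
  AA p.+1 + p.+1 * NN p.+1 = p.+1 * (2 ^ p * p`!).
Proof.
elim: p => [|p [IH1 IH2]]; first by [].
rewrite NN_S AA_S expnS factS.
have -> : 2 * p.+1 = (2 * p).+2 by lia.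
rewrite !factS; split; nia.
Qed.


Definition PB p := \sum_(0 <= j < p.+1) 'C(p + j, j) * 2 ^ (p - j).

Lemma banach p : PB p = 4 ^ p.
Proof.
elim: p => [|p IH]; first by rewrite /PB big_nat1.
set X := \sum_(0 <= j < p.+1) 'C(p.+1 + j, j) * 2 ^ (p - j).
set C := 'C(p + p.+1, p.+1).
have Ha : PB p.+1 = 2 * X + 'C(p.+1 + p.+1, p.+1).
  rewrite /PB big_nat_recr //= subnn expn0 muln1 /X big_distrr /=; congr (_ + _).
  apply: eq_big_nat => j /andP [_ Hj]; rewrite ltnS in Hj; rewrite subSn // expnS; lia.
have Hb : PB p.+1 = 2 ^ p.+1 + (\sum_(0 <= j < p.+1) 'C(p.+1 + j, j.+1) * 2 ^ (p - j)) + X.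
  rewrite /PB big_nat_recl // addn0 bin0 mul1n subn0 -addnA; congr (_ + _).
  rewrite /X -big_split /=; apply: eq_big_nat => j _.
  by rewrite addnS binS subSS mulnDl.
have Hc : 2 ^ p.+1 + (\sum_(0 <= j < p.+1) 'C(p.+1 + j, j.+1) * 2 ^ (p - j))
          = 2 * PB p + C.
  have E1 : \sum_(0 <= j < p.+2) 'C(p + j, j) * 2 ^ (p.+1 - j) = 2 * PB p + C.
    rewrite big_nat_recr //= subnn expn0 muln1 /PB big_distrr /=; congr (_ + _).
    apply: eq_big_nat => j /andP [_ Hj]; rewrite ltnS in Hj; rewrite subSn // expnS; lia.
  rewrite -E1 [RHS]big_nat_recl // addn0 bin0 mul1n subn0; congr (_ + _).
  by apply: eq_big_nat => j _; rewrite addnS addSn subSS.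
have Hd : 'C(p.+1 + p.+1, p.+1) = 2 * C.
  rewrite /C addnS binS -(bin_sub (leq_addl p.+1 p)) addnK.
  rewrite (addnC p.+1 p); lia.
rewrite expnS -IH; lia.
Qed.

Section Rat.
Local Open Scope ring_scope.

Definition cc (n k : nat) : rat :=
  ((2 * n - k - 3)`!)%:R / (((n - k - 1)`!)%:R * (2 ^ (n - k - 1))%:R).

Definition DD (n i : nat) : rat := (2 * (n - 1 - i))%:R * (i%:R - 1) * cc n i.

Lemma natr_neq0 (m : nat) : (0 < m)%N -> (m%:R : rat) != 0.
Proof. by move=> H; rewrite pnatr_eq0 -lt0n. Qed.

Lemma term_id p i : (i <= p)%N ->
  cc p.+2 i.+1 * ((i.+1 ^ 2)%:R) =
  2%:R * (p.+1)%:R * cc p.+2 i.+1 + (DD p.+2 i - DD p.+2 i.+1).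
Proof.
move=> /subnK <-; set q := (p - i)%N; clearbody q.
rewrite /DD /cc.
have -> : (2 * (q + i).+2 - i.+1 - 3 = i + 2 * q)%N by lia.
have -> : ((q + i).+2 - i.+1 - 1 = q)%N by lia.
have -> : (2 * (q + i).+2 - i - 3 = (i + 2 * q).+1)%N by lia.
have -> : ((q + i).+2 - i - 1 = q.+1)%N by lia.
have -> : ((q + i).+2 - 1 - i = q.+1)%N by lia.
have -> : ((q + i).+2 - 1 - i.+1 = q)%N by lia.
rewrite !factS (expnS 2 q).
have H1 := natr_neq0 (fact_gt0 q).
have H2 := natr_neq0 (expn_gt0 2 q).
rewrite !natrM.
field. by rewrite H1 H2 /= addrC natr1 natr_neq0.
Qed.

Lemma sum_c p : \sum_(1 <= k < p.+2) cc p.+2 k = (p`! * 2 ^ p)%:R.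
Proof.
rewrite big_add1 /= big_nat_rev /=.
have H2p := natr_neq0 (expn_gt0 2 p).
transitivity (\sum_(0 <= i < p.+1)
   ((p`!)%:R / (2 ^ p)%:R : rat) * ('C(p + i, i) * 2 ^ (p - i))%:R).
  apply: eq_big_nat => i /andP [_ Hi]; rewrite ltnS in Hi.
  rewrite add0n subSS /cc.
  have -> : (2 * p.+2 - (p - i).+1 - 3 = p + i)%N by lia.
  have -> : (p.+2 - (p - i).+1 - 1 = i)%N by lia.
  rewrite -(bin_fact (leq_addl p i)) addnK.
  have -> : (2 ^ p = 2 ^ (p - i) * 2 ^ i)%N by rewrite -expnD subnK.
  rewrite !natrM.
  have H1 := natr_neq0 (fact_gt0 i).
  have H3 := natr_neq0 (expn_gt0 2 i).
  have H4 := natr_neq0 (expn_gt0 2 (p - i)).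
  field. by rewrite H1 H3 H4.
rewrite -mulr_sumr -natr_sum.
have -> : (\sum_(0 <= i < p.+1) 'C(p + i, i) * 2 ^ (p - i))%N = PB p by [].
rewrite banach (_ : 4 = 2 * 2)%N // expnMn !natrM.
field. by rewrite H2p.
Qed.

Lemma main_sum p :
  \sum_(1 <= k < p.+2) (((2 * p.+2 - k - 3)`!)%:R * (k ^ 2)%:R
     / (((p.+2 - k - 1)`!)%:R * (2 ^ (p.+2 - k - 1))%:R))
  = (2 ^ p.+1 * p.+1`!)%:R - ((2 * p.+1)`!)%:R / (2 ^ p.+1 * p.+1`!)%:R :> rat.
Proof.
transitivity (\sum_(1 <= k < p.+2) cc p.+2 k * (k ^ 2)%:R).
  by apply: eq_bigr => k _; rewrite /cc mulrAC.
rewrite big_add1 /=.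
transitivity (\sum_(0 <= i < p.+1)
   (2%:R * (p.+1)%:R * cc p.+2 i.+1 + (DD p.+2 i - DD p.+2 i.+1))).
  by apply: eq_big_nat => i /andP [_ Hi]; apply: term_id; rewrite -ltnS.
rewrite big_split /= -mulr_sumr.
rewrite (telescope_sumr_eq (fun i => - DD p.+2 i) (fun i => DD p.+2 i - DD p.+2 i.+1)) //; last first.
  by move=> k _; rewrite opprK addrC.
have -> : \sum_(0 <= i < p.+1) cc p.+2 i.+1 = (p`! * 2 ^ p)%:R.
  by rewrite -(sum_c p) big_add1.
rewrite /DD /cc.
have -> : (p.+2 - 1 - p.+1 = 0)%N by lia.
have -> : (2 * p.+2 - 0 - 3 = (2 * p).+1)%N by lia.
have -> : (p.+2 - 0 - 1 = p.+1)%N by lia.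
have -> : (p.+2 - 1 - 0 = p.+1)%N by lia.
have -> : (2 * p.+1 = (2 * p).+2)%N by lia.
rewrite !factS expnS !natrM.
have H1 := natr_neq0 (fact_gt0 p).
have H2 := natr_neq0 (expn_gt0 2 p).
have H3 := natr_neq0 (fact_gt0 (2 * p)).
field. by rewrite H1 H2 natr_neq0 ?expn_gt0 ?natr_neq0 ?fact_gt0 //= addrC natr1 natr_neq0.
Qed.

End Rat.

Lemma In_mem (s : seq btree) t : List.In t s <-> t \in s.
Proof.
elim: s => [|x s IH] /=; first by split.
rewrite inE; split.
  by case=> [->|/IH ->]; rewrite ?eqxx ?orbT.
by case/orP => [/eqP ->|/IH]; [left|right].
Qed.

Lemma NoDup_uniq (s : seq btree) : List.NoDup s <-> uniq s.
Proof.
elim: s => [|x s IH] /=; first by split => // _; constructor.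
split.
  move=> H; inversion H; subst; apply/andP; split; last exact/IH.
  by apply/negP => /In_mem.
case/andP => Hx Hs; constructor; last exact/IH.
by move/In_mem; apply/negP.
Qed.

Theorem mainTheorem17 (n : nat) (hn : 3 <= n) :
  (exists s : seq btree, List.NoDup s /\ (forall t, List.In t s <-> is_BT n t)) /\
  (forall s : seq btree, List.NoDup s -> (forall t, List.In t s <-> is_BT n t) ->
     ((sumn (map sackin s))%:R : rat) =
     (n%:R * \sum_(1 <= k < n)
        (((2 * n - k - 3)`!)%:R * (k ^ 2)%:R
         / (((n - k - 1)`!)%:R * (2 ^ (n - k - 1))%:R)))%R).
Proof.
case: n hn => [|[|p]] // hp.
split.
  exists (E p.+2); split; first exact/NoDup_uniq/uniq_E.
  by move=> t; rewrite In_mem mem_E.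
move=> s Hs Hm.
have Hperm : perm_eq s (E p.+2).
  apply: uniq_perm; first exact/NoDup_uniq.
    exact: uniq_E.
  by move=> t; rewrite mem_E; apply/idP/idP => [/In_mem/Hm|/Hm/In_mem].
rewrite (perm_sumn (perm_map sackin Hperm)) -/(AA p.+2) main_sum.
have [Hc1 Hc2] := closed_forms p.+1.
have E2 : ((AA p.+2 + p.+2 * NN p.+2)%:R : rat) = ((p.+2 * (2 ^ p.+1 * p.+1`!))%:R)%R.
  by rewrite Hc2.
rewrite natrD natrM in E2.
have -> : ((AA p.+2)%:R : rat) = ((p.+2 * (2 ^ p.+1 * p.+1`!))%:R - (p.+2)%:R * (NN p.+2)%:R)%R.
  by rewrite -E2 addrK.
rewrite -Hc1 !natrM.
have H1 := natr_neq0 (fact_gt0 p.+1).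
have H2 := natr_neq0 (expn_gt0 2 p.+1).
field. by rewrite H2 andbT (natr_neq0 (fact_gt0 p)) /= addrC natr1 natr_neq0.
Qed.
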